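(* Let $X$ be a discretely geodesic metric space with $\beta$-stable intervals in which all bounded subsets are finite. Fix $z\in X$ and $\alpha>0$, and let $B$ be the closed ball $B(z,2\alpha\beta)$. Then $|\mathscr C(B)|<\infty$, and (1) every $f\in\mathrm E'(X)$ with $f(z)\le\alpha$ satisfies $\mathrm{rk}(A(f))\le\frac12|\mathscr C(B)|$; (2) for every $f\in\mathrm E'(X)$ with $f(z)\le\alpha$ and $\mathrm{rk}(A(f))=0$ there are at most $2^{|\mathscr C(B)|}$ sets $A\in\mathscr A(X)$ with $A\subset A(f)$ and $\mathrm{rk}(A)=1$.
   Context: $X$ is discretely geodesic if $d$ is integer valued and any $x,y$ are joined by an isometric embedding $\gamma\colon\{0,\dots,d(x,y)\}\to X$ with endpoints $x,y$. $I(x,y)=\{u: d(x,u)+d(u,y)=d(x,y)\}$; $C(x,v)=\{y: v\in I(x,y)\}$; $\beta$-stable intervals: Hausdorff distance of $I(x,y)$ and $I(x,y')$ at most $\beta$ whenever $d(y,y')=1$. $\mathscr C(B)$ is the set of all pointed cones $(v,C(x,v))$ with $v\in B$, $x\in X$. For $f\colon X\to\mathbb R$, $A(f)$ is the set of unordered pairs $\{x,y\}$ ($x=y$ allowed) with $f(x)+f(y)=d(x,y)$; $\Delta(X)=\{f: f(x)+f(y)\ge d(x,y)\ \forall x,y\}$; $\mathrm E'(X)=\{f\in\Delta(X):\bigcup A(f)=X\}$; $\mathscr A(X)=\{A(f): f\in\mathrm E'(X)\}$; $\mathrm{rk}(A)=\dim\{g\in\mathbb R^X: g(x)+g(y)=d(x,y)\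 \forall\{x,y\}\in A\}$. *)

(* Defs.v *)
From HB Require Import structures.
From mathcomp Require Import all_boot all_order all_algebra.
From mathcomp Require Import all_classical all_reals.
Set Implicit Arguments. Unset Strict Implicit. Unset Printing Implicit Defensive.
Import Order.TTheory GRing.Theory Num.Theory.
Local Open Scope classical_set_scope.
Local Open Scope ring_scope.

Definition is_int_metric (X : Type) (d : X -> X -> nat) : Prop :=
  (forall x y, d x y = 0%N <-> x = y) /\
  (forall x y, d x y = d y x) /\
  (forall x y z, (d x z <= d x y + d y z)%N).

Definition discretely_geodesic (X : Type) (d : X -> X -> nat) : Prop :=
  forall x y, exists g : nat -> X,
    g 0%N = x /\ g (d x y) = y /\
    forall i j, (i <= d x y)%N -> (j <= d x y)%N ->
      d (g i) (g j) = `|(i%:Z - j%:Z)|%N.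

Definition bounded_finite (X : Type) (d : X -> X -> nat) : Prop :=
  forall (A : set X), (exists z r, forall x, A x -> (d z x <= r)%N) -> finite_set A.

Definition interval (X : Type) (d : X -> X -> nat) (x y : X) : set X :=
  [set u | (d x u + d u y)%N = d x y].

Definition cone (X : Type) (d : X -> X -> nat) (x v : X) : set X :=
  [set y | interval d x y v].

Definition hausdorff_le (X : Type) (R : realType) (d : X -> X -> nat)
  (A B : set X) (b : R) : Prop :=
  (forall u, A u -> exists u', B u' /\ (d u u')%:R <= b) /\
  (forall u', B u' -> exists u, A u /\ (d u u')%:R <= b).

Definition stable_intervals (X : Type) (R : realType) (d : X -> X -> nat) (b : R) : Prop :=
  forall x y y', d y y' = 1%N -> hausdorff_le d (interval d x y) (interval d x y') b.

Definition cball (X : Type) (R : realType) (d : X -> X -> nat) (z : X) (r : R) : set X :=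
  [set x | (d z x)%:R <= r].

Definition pointed_cones (X : Type) (d : X -> X -> nat) (B : set X) : set (X * set X) :=
  [set p | exists v x, B v /\ p = (v, cone d x v)].

(* A(f), represented as the (symmetric) set of ordered pairs (x,y)
   with f x + f y = d x y; the unordered pair {x,y} belongs to A(f)
   iff (x,y) (equivalently (y,x)) belongs to this set. *)
Definition Aset (X : Type) (R : realType) (d : X -> X -> nat) (f : X -> R) : set (X * X) :=
  [set p | f p.1 + f p.2 = (d p.1 p.2)%:R].

Definition Delta (X : Type) (R : realType) (d : X -> X -> nat) : set (X -> R) :=
  [set f | forall x y, (d x y)%:R <= f x + f y].

Definition Eprime (X : Type) (R : realType) (d : X -> X -> nat) : set (X -> R) :=
  [set f | Delta d f /\ forall x, exists y, Aset d f (x, y)].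

Definition scriptA (X : Type) (R : realType) (d : X -> X -> nat) : set (set (X * X)) :=
  [set A | exists f, @Eprime X R d f /\ A = Aset d f].

Definition solset (X : Type) (R : realType) (d : X -> X -> nat) (A : set (X * X)) : set (X -> R) :=
  [set g | forall p, A p -> g p.1 + g p.2 = (d p.1 p.2)%:R].

Definition lin_indep (X : Type) (R : realType) (n : nat) (h : 'I_n -> X -> R) : Prop :=
  forall c : 'I_n -> R, (forall x, \sum_(i < n) c i * h i x = 0) -> forall i, c i = 0.

Definition affdim_ge (X : Type) (R : realType) (S : set (X -> R)) (n : nat) : Prop :=
  exists (g0 : X -> R) (g : 'I_n -> X -> R),
    S g0 /\ (forall i, S (g i)) /\ lin_indep (fun i x => g i x - g0 x).

Definition rk_ge (X : Type) (R : realType) (d : X -> X -> nat) (A : set (X * X)) (n : nat) : Prop :=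
  affdim_ge (@solset X R d A) n.

Definition rk_eq (X : Type) (R : realType) (d : X -> X -> nat) (A : set (X * X)) (n : nat) : Prop :=
  @rk_ge X R d A n /\ ~ @rk_ge X R d A n.+1.

(* Main.v *)
From Pilot Require Import Defs.
From HB Require Import structures.
From mathcomp Require Import all_boot all_order all_algebra.
From mathcomp Require Import all_classical all_reals.
From mathcomp Require Import finmap.
From mathcomp Require Import zify ring lra.
Import Order.TTheory GRing.Theory Num.Theory.
Set Implicit Arguments. Unset Strict Implicit. Unset Printing Implicit Defensive.
Local Open Scope classical_set_scope.
Local Open Scope ring_scope.
Notation itv := Pilot.Defs.interval.

Lemma met_xx (X : Type) (d : X -> X -> nat) : is_int_metric d -> forall x, d x x = 0%N.
Proof. by case=> h _ x; apply/h. Qed.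
Lemma met_eq (X : Type) (d : X -> X -> nat) : is_int_metric d -> forall x y, d x y = 0%N -> x = y.
Proof. by case=> h _ x y /h. Qed.
Lemma met_sym (X : Type) (d : X -> X -> nat) : is_int_metric d -> forall x y, d x y = d y x.
Proof. by case=> _ []. Qed.
Lemma met_tri (X : Type) (d : X -> X -> nat) : is_int_metric d -> forall x y z, (d x z <= d x y + d y z)%N.
Proof. by case=> _ []. Qed.

Lemma geo_step (X : Type) (d : X -> X -> nat) : discretely_geodesic d ->
  forall z y m, d z y = m.+1 -> exists y1, d z y1 = m /\ d y1 y = 1%N.
Proof.
move=> hg z y m hm; have [g [g0 [gy gd]]] := hg z y.
exists (g m); split.
  by rewrite -{1}g0 gd ?hm // dist0n.
by rewrite -gy hm gd ?hm // distnS.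
Qed.

Lemma interval_sub (X : Type) (d : X -> X -> nat) : is_int_metric d ->
  forall x y y1, (d x y1 + d y1 y = d x y)%N -> itv d x y1 `<=` itv d x y.
Proof.
move=> hm x y y1 h v; rewrite /itv /Defs.interval /= => hv.
have t1 := met_tri hm x v y. have t2 := met_tri hm v y1 y.
apply/eqP; rewrite eqn_leq t1 andbT. lia.
Qed.

Lemma near_interval (R : realType) (X : Type) (d : X -> X -> nat) (beta : R)
  (hm : is_int_metric d) (hg : discretely_geodesic d) (hs : stable_intervals d beta)
  (hb : 0 <= beta) (z x : X) :
  forall m y, d z y = m ->
  exists v, itv d x y v /\ (d z v)%:R <= beta * (d x z + d z y - d x y)%N%:R.
Proof.
elim=> [|m IH] y hy.
  have -> : y = z by apply/esym/(met_eq hm).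
  exists z; split; first by rewrite /itv /Defs.interval /= met_xx ?addn0.
  by rewrite met_xx // mulr_ge0.
have [y1 [hzy1 hy1y]] := geo_step hg hy.
have [v1 [hv1 hb1]] := IH y1 hzy1.
have tA := met_tri hm x y1 y. have tB := met_tri hm x y y1.
have tC := met_tri hm x z y1. have tD := met_tri hm x z y.
have sy := met_sym hm y y1.
case: (eqVneq (d x y1 + 1)%N (d x y)) => heq.
  exists v1; split; first by apply: (interval_sub hm (y1:=y1)) => //; rewrite hy1y.
  apply: (le_trans hb1); rewrite ler_wpM2l // ler_nat. lia.
have [v [hv hvv]] := (hs x y1 y hy1y).1 v1 hv1.
exists v; split => //.
have t3 := met_tri hm z v1 v.
apply: (le_trans (y := (d z v1)%:R + (d v1 v)%:R)).
  by rewrite -natrD ler_nat.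
apply: (le_trans (y := beta * (d x z + d z y1 - d x y1)%N%:R + beta)).
  by apply: lerD.
rewrite -[X in _ + X]mulr1 -mulrDr ler_wpM2l // natr1 ler_nat. lia.
Qed.

Lemma cone_sub (R : realType) (X : Type) (d : X -> X -> nat) (beta : R)
  (hm : is_int_metric d) (hg : discretely_geodesic d) (hs : stable_intervals d beta)
  (v x x' : X) :
  (forall u, (d v u)%:R <= beta -> (d x u + d x' v = d x' u + d x v)%N) ->
  cone d x v `<=` cone d x' v.
Proof.
move=> hc y; rewrite /cone /itv /Defs.interval /=.
move: {2}(d v y) (erefl (d v y)) => n; elim: n y => [|n IH] y hy hxy.
  have -> : y = v by apply/esym/(met_eq hm).
  by rewrite met_xx // addn0.
have [y1 [hvy1 hy1y]] := geo_step hg hy.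
have t1 := met_tri hm x y1 y. have t2 := met_tri hm x v y1.
have h1 : (d x v + d v y1)%N = d x y1 by lia.
have := IH y1 hvy1 h1 => h1'.
have t3 := met_tri hm x' v y. have t4 := met_tri hm x' y y1.
have sy := met_sym hm y y1.
have [//|hlt] := eqVneq (d x' v + d v y)%N (d x' y).
exfalso.
have hle : (d x' y <= d x' v + n)%N by lia.
have [u [hu hvu]] := (hs x' y1 y hy1y).1 v h1'.
move: hu; rewrite /itv /Defs.interval /= => hu.
have := hc u hvu => hcu.
have t5 := met_tri hm x u y.
lia.
Qed.

Lemma four_point (R : realType) (X : Type) (d : X -> X -> nat) (f : X -> R)
  (hD : Delta d f) (x y x' y' v : X) :
  Aset d f (x, y) -> Aset d f (x', y') -> itv d x y v -> itv d x' y' v ->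
  cone d x v = cone d x' v -> Aset d f (x, y') /\ Aset d f (x', y).
Proof.
rewrite /Aset /itv /Defs.interval /= => hxy hxy' hv hv' hc.
have h1 : cone d x' v y by rewrite -hc /cone /itv /Defs.interval /=.
have h2 : cone d x v y' by rewrite hc /cone /itv /Defs.interval /=.
move: h1 h2; rewrite /cone /itv /Defs.interval /= => h1 h2.
have a1 := hD x y'. have a2 := hD x' y.
have e : (d x y')%:R + (d x' y)%:R = f x + f y + (f x' + f y') :> R.
  rewrite hxy hxy' -!natrD; congr (_%:R); lia.
split; apply/eqP; rewrite eq_le; apply/andP; split => //; lra.
Qed.

Lemma pair_ball (R : realType) (X : Type) (d : X -> X -> nat) (beta : R)
  (hm : is_int_metric d) (hg : discretely_geodesic d) (hs : stable_intervals d beta)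
  (hb : 0 <= beta) (z : X) (alpha : R) (f : X -> R) (hD : Delta d f)
  (hfz : f z <= alpha) (x y : X) :
  Aset d f (x, y) -> exists v, itv d x y v /\ cball d z (2 * alpha * beta) v.
Proof.
rewrite /Aset /= => hxy.
have [v [hv hvb]] := near_interval hm hg hs hb x (erefl (d z y)).
exists v; split => //; rewrite /cball /=.
apply: (le_trans hvb).
have t := met_tri hm x z y.
have e : (d x z + d z y - d x y)%N%:R = (d x z)%:R + (d z y)%:R - (d x y)%:R :> R.
  by rewrite natrB // natrD.
rewrite e -hxy.
have a1 := hD x z. have a2 := hD z y.
rewrite [_ * beta]mulrC ler_wpM2l //. lra.
Qed.

Lemma neg_beta_single (R : realType) (X : Type) (d : X -> X -> nat) (beta : R)
  (hm : is_int_metric d) (hg : discretely_geodesic d) (hs : stable_intervals d beta)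
  (hb : beta < 0) (z x : X) : x = z.
Proof.
case E: (d z x) => [|m]; first by apply/esym/(met_eq hm).
have [y1 [_ h1]] := geo_step hg E.
have hy1 : itv d y1 y1 y1 by rewrite /itv /Defs.interval /= (met_xx hm).
have [u [_ hu]] := (hs y1 y1 x h1).1 y1 hy1.
have h0 : (0 : R) <= (d y1 u)%:R by [].
exfalso; lra.
Qed.

Lemma fin_pow (T : Type) (A : set T) : finite_set A -> finite_set [set S : set T | S `<=` A].
Proof.
elim/Pchoice: T => T in A *.
move=> /finite_fsetP[F ->].
apply: (@sub_finite_set _ _ ((fun G : {fset T} => [set` G]) @` [set` fpowerset F])).
  move=> S /= hS.
  have : finite_set S by apply: (sub_finite_set hS); exact: finite_fset.
  move=> /finite_fsetP[G hG]; exists G => //=.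
  rewrite fpowersetE; apply/fsubsetP => t tG.
  by have := hS t; rewrite hG /=; apply.
by apply: finite_image; exact: finite_fset.
Qed.

Lemma nat_bound (R : realType) (r : R) : exists M : nat, r <= M%:R.
Proof.
exists (Num.Def.archi_bound `|r|).
apply: (le_trans (ler_norm r)); apply/ltW/archi_boundP; exact: normr_ge0.
Qed.

Lemma cones_at_finite (R : realType) (X : Type) (d : X -> X -> nat) (beta : R)
  (hm : is_int_metric d) (hg : discretely_geodesic d) (hs : stable_intervals d beta)
  (hfin : bounded_finite d) (v : X) :
  finite_set [set cone d x v | x in [set: X]].
Proof.
have [M hM] := nat_bound beta.
pose Bv := [set u | (d v u)%:R <= beta].
have hBv : forall u, Bv u -> (d v u <= M)%N.
  move=> u /= hu; rewrite -(ler_nat R); exact: le_trans hu hM.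
have fBv : finite_set Bv by apply: hfin; exists v, M.
pose Q x := [set p : X * nat | Bv p.1 /\ (p.2 + d x v = d x p.1 + M)%N].
pose Dom := Bv `*` `I_(2 * M).+1.
have fDom : finite_set Dom by apply: finite_setX => //; exact: finite_II.
pose G (Q0 : set (X * nat)) : set X :=
  match pselect (exists x, Q x = Q0) with
  | left h => cone d (projT1 (cid h)) v
  | right _ => set0 end.
apply: (@sub_finite_set _ _ (G @` [set S | S `<=` Dom])); last first.
  by apply: finite_image; exact: fin_pow.
move=> _ [x _ <-]; exists (Q x).
  move=> [u k] /= [hu hk]; split => //=.
  have := hBv u hu; have t := met_tri hm x v u. rewrite /= in hk. lia.
rewrite /G; case: pselect => [h|]; last by move=> /(_ (ex_intro _ x erefl)).
case: (cid h) => x0 /= hx0.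
have key : forall u, (d v u)%:R <= beta -> (d x0 u + d x v = d x u + d x0 v)%N.
  move=> u hu.
  have hu' : Bv u by [].
  have t := met_tri hm x v u. have b := hBv u hu'.
  have t2 := met_tri hm x u v. have sm := met_sym hm u v.
  have : Q x (u, (d x u + M - d x v)%N) by split => //=; lia.
  rewrite -hx0 => -[_ /=]. lia.
apply/seteqP; split; apply: (cone_sub hm hg hs) => u hu; have := key u hu; lia.
Qed.

Lemma cones_finite (R : realType) (X : Type) (d : X -> X -> nat) (beta : R)
  (hm : is_int_metric d) (hg : discretely_geodesic d) (hs : stable_intervals d beta)
  (hfin : bounded_finite d) (z : X) (r : R) :
  finite_set (pointed_cones d (cball d z r)).
Proof.
have [M hM] := nat_bound r.
have fB : finite_set (cball d z r).
  apply: hfin; exists z, M => x /= hx; rewrite -(ler_nat R); exact: le_trans hx hM.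
apply: (@sub_finite_set _ _
  (\bigcup_(v in cball d z r) ((fun C => (v, C)) @` [set cone d x v | x in [set: X]]))).
  move=> _ [v [x [hv ->]]]; exists v => //; exists (cone d x v) => //; by exists x.
apply: bigcup_finite => // v _; apply: finite_image.
exact: (cones_at_finite hm hg hs hfin).
Qed.
Lemma sign_trick (R : realType) (N k : nat) (U : 'I_k -> 'I_N -> R)
  (h1 : forall c, (forall i, U i c = 0) \/ exists c', forall i, U i c' = - U i c)
  (hind : forall a : 'I_k -> R, (forall c, \sum_i a i * U i c = 0) -> forall i, a i = 0) :
  (k + k <= N)%N.
Proof.
pose s c := if [pick j | U j c != 0] is Some j then Num.sg (U j c) else 1.
have s0 : forall c, s c != 0.
  move=> c; rewrite /s; case: pickP => [j /= hj|_]; last exact: oner_neq0.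
  by rewrite sgr_eq0.
pose M1 : 'M[R]_(k, N) := \matrix_(i, c) U i c.
pose M2 : 'M[R]_(k, N) := \matrix_(i, c) (s c * U i c).
suff : row_free (col_mx M1 M2).
  by rewrite -row_leq_rank => /leq_trans; apply; exact: rank_leq_col.
apply: inj_row_free => a ha.
rewrite -(hsubmxK a) mul_row_col in ha.
set a1 := lsubmx a in ha *; set a2 := rsubmx a in ha *.
pose A c := \sum_i a1 0 i * U i c.
pose B c := \sum_i a2 0 i * U i c.
have hAB : forall c, A c + s c * B c = 0.
  move=> c; have := congr1 (fun m : 'M[R]_(1, N) => m 0 c) ha; rewrite !mxE => <-.
  rewrite /A /B mulr_sumr; congr (_ + _); apply: eq_bigr => i _; rewrite !mxE //.
  by rewrite mulrCA.
have hAB0 : forall c, A c = 0 /\ B c = 0.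
  move=> c; case: (h1 c) => [hz|[c' hc']].
    by rewrite /A /B; split; apply: big1 => i _; rewrite hz mulr0.
  have eA : A c' = - A c.
    by rewrite /A -sumrN; apply: eq_bigr => i _; rewrite hc' mulrN.
  have eB : B c' = - B c.
    by rewrite /B -sumrN; apply: eq_bigr => i _; rewrite hc' mulrN.
  have hp : [pick j | U j c' != 0] = [pick j | U j c != 0].
    by apply: eq_pick => j /=; rewrite hc' oppr_eq0.
  move: (hAB c') (hAB c); rewrite eA eB /s hp.
  case: pickP => [j hj|hn].
    rewrite hc' sgrN => e1 e2.
    have hsB : Num.sg (U j c) * B c = 0 by lra.
    have hsn : Num.sg (U j c) != 0 by rewrite sgr_eq0.
    move/eqP: hsB; rewrite mulf_eq0 (negbTE hsn) /= => /eqP hB.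
    by split => //; rewrite hB mulr0 addr0 in e2.
  have hz : forall i, U i c = 0 by move=> i; have := hn i; rewrite /= => /negbFE /eqP.
  by rewrite /A /B; split; apply: big1 => i _; rewrite hz mulr0.
have ha1 : a1 = 0.
  apply/rowP => i; rewrite [RHS]mxE; apply: (hind (fun i => a1 0 i)) => c.
  by have [] := hAB0 c.
have ha2 : a2 = 0.
  apply/rowP => i; rewrite [RHS]mxE; apply: (hind (fun i => a2 0 i)) => c.
  by have [] := hAB0 c.
by rewrite -(hsubmxK a) -/a1 -/a2 ha1 ha2 row_mx0.
Qed.

Lemma part1 (R : realType) (X : Type) (d : X -> X -> nat) (beta : R)
  (hm : is_int_metric d) (hg : discretely_geodesic d) (hs : stable_intervals d beta)
  (hb : 0 <= beta) (z : X) (alpha : R) (N : nat) (enc : X * set X -> nat)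
  (henc : set_bij (pointed_cones d (cball d z (2 * alpha * beta))) `I_N enc)
  (f : X -> R) (hf : Eprime d f) (hfz : f z <= alpha) (k : nat)
  (hk : @rk_ge X R d (Aset d f) k) : (k + k <= N)%N.
Proof.
case: hf => hD hE; case: henc => hfun hinj _.
set B := cball d z (2 * alpha * beta) in hfun hinj.
have hP : forall x, exists q : X * X, Aset d f (x, q.1) /\ itv d x q.1 q.2 /\ B q.2.
  move=> x; have [y hy] := hE x.
  have [v [hv hB]] := pair_ball hm hg hs hb hD hfz hy.
  by exists (y, v).
have [P hPP] := choice hP.
pose phi x := ((P x).2, cone d x (P x).2).
have hphi : forall x, pointed_cones d B (phi x).
  by move=> x; exists (P x).2, x; split => //; have [_ []] := hPP x.
pose e x := enc (phi x).
have he : forall x, (e x < N)%N by move=> x; exact: (hfun _ (hphi x)).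
have hfib : forall x x', e x = e x' -> Aset d f (x, (P x').1).
  move=> x x' hxx'.
  have := hinj _ _ (mem_set (hphi x)) (mem_set (hphi x')) hxx'; rewrite /phi => -[hv hc].
  have [a1 [i1 _]] := hPP x; have [a2 [i2 _]] := hPP x'.
  rewrite hv in i1 hc.
  exact: (four_point hD a1 a2 i1 i2 hc).1.
case: hk => g0 [g [hg0 [hgi hli]]].
pose h i x := g i x - g0 x.
have Hh : forall i x y, Aset d f (x, y) -> h i x + h i y = 0.
  move=> i x y hxy; have := hg0 _ hxy; have := hgi i _ hxy; rewrite /h /= => e1 e2.
  lra.
have hfibh : forall i x x', e x = e x' -> h i x = h i x'.
  move=> i x x' hxx'.
  have := Hh i _ _ (hfib _ _ hxx'); have := Hh i _ _ (hfib _ _ (erefl (e x'))).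
  lra.
pose rep (c : 'I_N) := match pselect (exists x, e x = c) with
  | left hx => Some (projT1 (cid hx)) | right _ => None end.
have hrep : forall c, (rep c = None /\ ~ exists x, e x = c) \/
    exists x, rep c = Some x /\ e x = c.
  move=> c; rewrite /rep; case: pselect => [hx|hn]; last by left.
  by right; case: (cid hx) => x0 /= hx0; exists x0.
pose U i c := if rep c is Some x then h i x else 0.
have Ua : forall i x, U i (Ordinal (he x)) = h i x.
  move=> i x; rewrite /U; case: (hrep (Ordinal (he x))) => [[_ []]|[x0 [-> hx0]]].
    by exists x.
  exact: hfibh.
apply: (sign_trick (U := U)).
  move=> c; case: (hrep c) => [[hc _]|[x0 [hc hx0]]].
    by left => i; rewrite /U hc.
  right; exists (Ordinal (he (P x0).1)) => i.
  rewrite Ua /U hc; have := Hh i _ _ (hPP x0).1; lra.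
move=> a ha; apply: (hli a) => x.
have := ha (Ordinal (he x)); under eq_bigr => i _ do rewrite Ua.
by [].
Qed.

Lemma three_vals (R : realType) (X : Type) (d : X -> X -> nat) (f g : X -> R)
  (hfD : Delta d f) (hg : Eprime d g) (hsub : Aset d g `<=` Aset d f)
  (hf0 : ~ @rk_ge X R d (Aset d f) 1%N) (hg1 : @rk_eq X R d (Aset d g) 1%N) :
  exists c : R, 0 < c /\ forall x, g x - f x = 0 \/ g x - f x = c \/ g x - f x = - c.
Proof.
case: hg => hgD hgE; case: hg1 => hg1 hg2.
pose del x := g x - f x.
have hA : forall x y, Aset d g (x, y) -> del x + del y = 0.
  move=> x y hxy; have := hsub _ hxy; move: hxy; rewrite /Aset /del /= => e1 e2; lra.
have [x1 hx1] : exists x1, del x1 != 0.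
  apply: contrapT => hn; apply: hf0.
  have -> : f = g.
    apply/funext => x; case: (eqVneq (del x) 0) => [h|h].
      by rewrite /del in h; lra.
    by exfalso; apply: hn; exists x.
  exact: hg1.
pose eta x := Num.sg (del x).
pose gs (i : 'I_2) x := if i == ord0 then g x else f x + eta x.
have hsolf : @solset X R d (Aset d g) f by move=> p /hsub.
have hsol : forall i, @solset X R d (Aset d g) (gs i).
  move=> i p hp; rewrite /gs; case: (i == ord0); first exact: hp.
  have := hsolf p hp; have := hA _ _ hp; case: p hp => x y hp /= e1 e2.
  have -> : eta y = - eta x by rewrite /eta -sgrN; congr Num.sg; lra.
  lra.
have : ~ lin_indep (fun i x => gs i x - f x).
  by move=> hli; apply: hg2; exists f, gs.
move=> /existsNP [c /not_implyP [hc /existsNP [i hi]]].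
have hc' : forall x, c ord0 * del x + c ord_max * eta x = 0.
  move=> x; have := hc x; rewrite big_ord_recr big_ord1 /= /gs /= /del.
  move=> <-; congr (_ + _); first by congr (c _ * _); apply: val_inj.
  rewrite /=; congr (_ * _); lra.
have c1 : c ord_max != 0.
  apply/negP => /eqP c1; apply: hi.
  have c0 : c ord0 = 0.
    have := hc' x1; rewrite c1 mul0r addr0 => /eqP; rewrite mulf_eq0 (negbTE hx1) orbF.
    by move/eqP.
  by case: i => -[|[|//]] ? /=; [rewrite -c0; congr c; apply: val_inj | rewrite -c1; congr c; apply: val_inj].
pose mu := - (c ord0 / c ord_max).
have hmu : forall x, eta x = mu * del x.
  move=> x; have := hc' x; rewrite /mu => e.
  apply: (mulfI c1); rewrite mulrA mulrN mulrCA divff // mulr1; lra.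
have mu0 : mu != 0.
  apply/negP => /eqP m0; have := hmu x1; rewrite m0 mul0r /eta => /eqP.
  by rewrite sgr_eq0 (negbTE hx1).
exists (`|mu|^-1); split; first by rewrite invr_gt0 normr_gt0.
move=> x; rewrite -/(del x); case: (eqVneq (del x) 0) => [->|hdx]; first by left.
right.
have hn : `|del x| = `|mu|^-1.
  have := congr1 (fun t => `|t|) (hmu x); rewrite /eta normrM normr_sg hdx /= => e.
  have nm : `|mu| != 0 by rewrite normr_eq0.
  by apply: (mulfI nm); rewrite mulfV // -e.
have := eqxx `|del x|; rewrite {2}hn eqr_norml => /andP[/orP[/eqP ->|/eqP ->] _].
  by left.
by right.
Qed.

Definition K0set (X : Type) (R : realType) (d : X -> X -> nat) (f : X -> R) (K : set X) :=
  [set x | exists y, K y /\ Aset d f (x, y)].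
Definition Dset (X : Type) (R : realType) (d : X -> X -> nat) (f : X -> R) (K : set X) :=
  [set p : X * X | Aset d f p /\ ((K p.1 /\ K0set d f K p.2) \/ (K0set d f K p.1 /\ K p.2) \/
     (~ K p.1 /\ ~ K0set d f K p.1 /\ ~ K p.2 /\ ~ K0set d f K p.2))].

Lemma Aset_det (R : realType) (X : Type) (d : X -> X -> nat) (f g : X -> R)
  (hfD : Delta d f) (hg : Eprime d g) (hsub : Aset d g `<=` Aset d f)
  (hf0 : ~ @rk_ge X R d (Aset d f) 1%N) (hg1 : @rk_eq X R d (Aset d g) 1%N) :
  Aset d g = Dset d f [set x | g x < f x].
Proof.
have [c [c0 hv]] := three_vals hfD hg hsub hf0 hg1.
case: hg => hgD hgE.
have eK : [set x | g x < f x] = [set x | g x - f x = - c].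
  apply/seteqP; split => x /=; case: (hv x) => [a|[a|a]]; lra.
have eK0 : K0set d f [set x | g x < f x] = [set x | g x - f x = c].
  rewrite eK; apply/seteqP; split => x /=.
    move=> [y [hy hxy]]; have := hgD x y; move: hxy; rewrite /Aset /= => hxy h; rewrite /= in hy.
    case: (hv x) => [a|[a|a]]; lra.
  move=> hx; have [y hy] := hgE x; exists y; split; last exact: hsub.
  have := hsub _ hy; move: hy; rewrite /Aset /= => e1 e2; lra.
rewrite /Dset eK0 eK; apply/seteqP; split => -[x y] /=.
  move=> hxy; split; first exact: hsub.
  have := hsub _ hxy; move: hxy; rewrite /Aset /= => e1 e2.
  case: (hv x) => [a|[a|a]]; case: (hv y) => [b|[b|b]]; try (exfalso; lra).
  - by right; right; repeat split; move=> ?; lra.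
  - by right; left; split; lra.
  - by left; split; lra.
move=> [hxy hh]; move: hxy; rewrite /Aset /= => hxy.
case: hh => [[h1 h2]|[[h1 h2]|[h1 [h2 [h3 h4]]]]]; try lra.
case: (hv x) => [a|[a|a]]; case: (hv y) => [b|[b|b]]; lra.
Qed.

Definition Phiset (X : Type) (R : realType) (d : X -> X -> nat) (f : X -> R) (B : set X) (x : X) :=
  [set p : X * set X | exists y v, Aset d f (x, y) /\ itv d x y v /\ B v /\ p = (v, cone d x v)].
Definition Sgset (X : Type) (R : realType) (d : X -> X -> nat) (f g : X -> R) (B : set X) :=
  [set p | exists x, g x < f x /\ Phiset d f B x p].

Lemma K1_char (R : realType) (X : Type) (d : X -> X -> nat) (beta : R)
  (hm : is_int_metric d) (hg : discretely_geodesic d) (hs : stable_intervals d beta)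
  (hb : 0 <= beta) (z : X) (alpha : R) (f g : X -> R) (hfD : Delta d f)
  (hfz : f z <= alpha) (hge : Eprime d g) (hsub : Aset d g `<=` Aset d f) (x' : X) :
  Phiset d f (cball d z (2 * alpha * beta)) x' `<=` Sgset d f g (cball d z (2 * alpha * beta))
  -> g x' < f x'.
Proof.
case: hge => hgD hgE => hPS.
have [w hw] := hgE x'; have hw' := hsub _ hw.
have [v [hv hB]] := pair_ball hm hg hs hb hfD hfz hw'.
have : Phiset d f (cball d z (2 * alpha * beta)) x' (v, cone d x' v) by exists w, v.
move=> /hPS [x [hx [y [v2 [hxy [hv2 [_ heq]]]]]]].
case: heq => ev ec; rewrite -ev in hv2 ec.
have [hxw _] := four_point hfD hxy hw' hv2 hv (esym ec).
have := hgD x w; move: hw hw' hxw; rewrite /Aset /= => e1 e2 e3 e4; lra.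
Qed.

Lemma part2 (R : realType) (X : Type) (d : X -> X -> nat) (beta : R)
  (hm : is_int_metric d) (hg : discretely_geodesic d) (hs : stable_intervals d beta)
  (hb : 0 <= beta) (z : X) (alpha : R) (N : nat) (enc : X * set X -> nat)
  (henc : set_bij (pointed_cones d (cball d z (2 * alpha * beta))) `I_N enc)
  (f : X -> R) (hf : Eprime d f) (hfz : f z <= alpha)
  (hf0 : @rk_eq X R d (Aset d f) 0) (n : nat) (F : 'I_n -> set (X * X))
  (hFi : injective F)
  (hF : forall i, @scriptA X R d (F i) /\ F i `<=` Aset d f /\ @rk_eq X R d (F i) 1) :
  (n <= 2 ^ N)%N.
Proof.
case: hf => hfD hfE; case: henc => hfun hinj _.
set B := cball d z (2 * alpha * beta) in hfun hinj.
have [G hG] := choice (fun i => (hF i).1).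
have hGi : forall i, Eprime d (G i) /\ Aset d (G i) `<=` Aset d f /\
    @rk_eq X R d (Aset d (G i)) 1.
  move=> i; have [hE hFe] := hG i; rewrite -hFe; split => //; exact: (hF i).2.
have hPB : forall g p, Sgset d f g B p -> pointed_cones d B p.
  move=> g p [x [_ [y [v [_ [_ [hv ->]]]]]]]; by exists v, x.
pose T (i : 'I_n) : {set 'I_N} :=
  finset (fun c : 'I_N => `[< exists p, Sgset d f (G i) B p /\ enc p = c >]).
have hS : forall i j, T i = T j -> Sgset d f (G i) B `<=` Sgset d f (G j) B.
  move=> i j hij p hp.
  have hpc := hPB _ _ hp.
  have hlt : (enc p < N)%N by exact: (hfun _ hpc).
  have : Ordinal hlt \in T j.
    rewrite -hij inE; apply/asboolP; by exists p.
  rewrite inE => /asboolP [p' [hp' he]].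
  have : p' = p := hinj _ _ (mem_set (hPB _ _ hp')) (mem_set hpc) he.
  by move=> <-.
have hK : forall i j, T i = T j -> forall x, G i x < f x -> G j x < f x.
  move=> i j hij x hx.
  have [hE [hsub _]] := hGi j.
  apply: (K1_char hm hg hs hb hfD hfz hE hsub) => p hp.
  apply: (hS i j hij); exists x; split => //.
have hT : injective T.
  move=> i j hij; apply: hFi.
  have [hEi [hsi hri]] := hGi i; have [hEj [hsj hrj]] := hGi j.
  rewrite (hG i).2 (hG j).2.
  rewrite (Aset_det hfD hEi hsi hf0.2 hri) (Aset_det hfD hEj hsj hf0.2 hrj).
  congr Dset; apply/seteqP; split => x /=.
    exact: hK.
  exact: (hK j i (esym hij)).
have := leq_card T hT.
by rewrite card_ord -cardsT -powersetT card_powerset cardsT card_ord.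
Qed.

Lemma single_rk (R : realType) (X : Type) (d : X -> X -> nat) (z : X)
  (hz : forall x, x = z) (A : set (X * X)) (hA : A (z, z)) (k : nat) :
  ~ @rk_ge X R d A k.+1.
Proof.
move=> [g0 [g [hg0 [hgi hli]]]].
have h : forall i x, g i x - g0 x = 0.
  move=> i x; rewrite (hz x).
  have := hg0 _ hA; have := hgi i _ hA; rewrite /= => e1 e2; lra.
have := hli (fun _ => 1) => /(_ _) /(_ ord0).
have H : forall x, \sum_(i < k.+1) 1 * (g i x - g0 x) = 0 :> R.
  by move=> x; apply: big1 => i _; rewrite h mulr0.
by move=> /(_ H) /eqP; rewrite oner_eq0.
Qed.

Lemma Aset_zz (R : realType) (X : Type) (d : X -> X -> nat) (z : X)
  (hz : forall x, x = z) (g : X -> R) (hg : Eprime d g) : Aset d g (z, z).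
Proof. by case: hg => _ /(_ z) [y]; rewrite (hz y). Qed.

Theorem proposition5p12 (R : realType) (X : Type) (d : X -> X -> nat) (beta : R)
  (hmet : is_int_metric d) (hgeo : discretely_geodesic d)
  (hstab : stable_intervals d beta) (hfin : bounded_finite d)
  (z : X) (alpha : R) (halpha : 0 < alpha) :
  let B := cball d z (2 * alpha * beta) in
  exists N : nat, (pointed_cones d B #= `I_N)%card /\
    (forall f : X -> R, Eprime d f -> f z <= alpha ->
       forall k : nat, @rk_ge X R d (Aset d f) k -> (k%:R : R) <= N%:R / 2) /\
    (forall f : X -> R, Eprime d f -> f z <= alpha -> @rk_eq X R d (Aset d f) 0 ->
       forall (n : nat) (F : 'I_n -> set (X * X)), injective F ->
       (forall i, @scriptA X R d (F i) /\ F i `<=` Aset d f /\ @rk_eq X R d (F i) 1) ->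
       (n <= 2 ^ N)%N).
Proof.
move=> B.
have [N hN] := cones_finite hmet hgeo hstab hfin z (2 * alpha * beta).
exists N; split => //.
have [enc henc] := (card_set_bijP hN).
case: (leP 0 beta) => hb.
  split.
    move=> f hf hfz k hk.
    have := part1 hmet hgeo hstab hb henc hf hfz hk => hkN.
    rewrite ler_pdivlMr // -natrM ler_nat; lia.
  move=> f hf hfz hf0 n F hFi hF.
  exact: (part2 hmet hgeo hstab hb henc hf hfz hf0 hFi hF).
have hz := neg_beta_single hmet hgeo hstab hb z.
split.
  move=> f hf hfz [|k] hk; first by rewrite divr_ge0.
  by exfalso; apply: (single_rk hz (Aset_zz hz hf) hk).
move=> f hf hfz hf0 [|n] F hFi hF //.
have [[g [hg hFg]] [_ [hr _]]] := hF ord0.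
exfalso; apply: (single_rk (k:=0) hz _ hr); rewrite hFg.
by case: hg => _ /(_ z) [y]; rewrite (hz y).
Qed.
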